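(* Let $\Omega\subset\mathbb{R}^2$ be a convex region and $P$ a set of $n$ points on its boundary $\partial\Omega$, and let $G'(P)$ be the weighted directed graph constructed from $P$ as described in the context. Then for each pair of points $p_i,p_j\in P$ with $p_i\uparrow p_j$, there exists a directed path in $G'(P)$ from the vertex $p_i$ to the vertex $p_j$ whose cost equals $|p_ip_j|_1$, the $L_1$-length of the segment $p_ip_j$. Furthermore, $G'(P)$ has $\mathcal{O}(n\log n)$ vertices and edges.
   Context: For points $p,q$ write $p\uparrow q$ if the segment $pq$ is $xy$-monotone from $p$ to $q$, i.e. $q$ has $x$- and $y$-coordinates at least those of $p$. Construction of $G'(P)$: its vertex set is initialized to $P$. Take a vertical median line $m$ splitting $P$ into at least $\lfloor |P|/2-1\rfloor$ points on each side. Let $m_1$ (resp. $m_2$) be the upper (resp. lower) intersection point of $m$ with $\partial\Omega$, added as Steiner vertices, and let $\ell_1,\ell_2$ be the horizontal lines through $m_1,m_2$. Let $P_{above}$ be the points of $P$ above $\ell_1$, $P_{below}$ those below $\ell_2$, and $P_{middle}$ the rest. For each $p\in P_{middle}$ add its orthogonal projection $p^m$ onto $m$ as a Steiner vertex and the edge between $p$ and $p^m$, directed in $xy$-monotone order. Sorting $P_{middle}=\langle p_1,\dots,p_k\rangle$ by increasing $y$-coordinate, add edges $(p_i^m,p_{i+1}^m)$ for $i=1,\dots,k-1$, and edges $(m_2,p_1^m)$ and $(p_k^m,m_1)$. For each $p\in P_{above}$ add edge $(m_1,p)$ and for each $p\in P_{below}$ add edge $(p,m_2)$. Each edge has weight equal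 to its $L_1$-length. Then recurse on the points of $P$ to the left of $m$ and on those to the right of $m$. The cost of a path is the sum of its edge weights. *)

(* Defs.v *)
From HB Require Import structures.
From mathcomp Require Import all_boot all_order all_algebra.
From mathcomp Require Import all_classical all_reals all_analysis.
Set Implicit Arguments. Unset Strict Implicit. Unset Printing Implicit Defensive.
Import Order.TTheory GRing.Theory Num.Theory numFieldNormedType.Exports.
Local Open Scope ring_scope.
Local Open Scope classical_set_scope.

Section Defs.
Variable R : realType.
Notation point := (R * R)%type.

Definition d1 (p q : point) : R := `|q.1 - p.1| + `|q.2 - p.2|.

(* p "up" q : segment pq is xy-monotone from p to q *)
Definition up (p q : point) : bool := (p.1 <= q.1) && (p.2 <= q.2).

Definition bd (O : set point) : set point := closure O `\` interior O.

Definition convex_pl (O : set point) : Prop :=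
  forall p q (t : R), O p -> O q -> 0 <= t <= 1 ->
    O (t * p.1 + (1 - t) * q.1, t * p.2 + (1 - t) * q.2).

Definition convex_region (O : set point) : Prop :=
  [/\ convex_pl O, compact O & interior O !=set0].

Definition orient (u v : point) : point * point := if up u v then (u, v) else (v, u).

Definition consec (l : seq point) : seq (point * point) := zip l (behead l).

Definition leftof (c : R) (P : seq point) := [seq p : point <- P | p.1 < c].
Definition rightof (c : R) (P : seq point) := [seq p : point <- P | c < p.1].

(* G'(P) Ω P V E : (V, E) (vertex list, directed edge list) is a graph G'(P)
   obtained by the recursive construction of the paper (for some choice of
   median lines).  Edge weights are L1 lengths, see [pcost]. *)
Inductive Gprime (O : set point) : seq point -> seq point -> seq (point * point) -> Prop :=
| Gprime_base (P : seq point) : (size P <= 1)%N -> Gprime O P P [::]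
| Gprime_step (P : seq point) (c : R) (m1 m2 : point) (s : seq point)
      (VL VR : seq point) (EL ER : seq (point * point)) :
    (2 <= size P)%N ->
    (* median vertical line m : x = c *)
    (size (leftof c P) <= (size P)./2)%N ->
    (size (rightof c P) <= (size P)./2)%N ->
    bd O m1 -> m1.1 = c -> (forall z, bd O z -> z.1 = c -> z.2 <= m1.2) ->
    bd O m2 -> m2.1 = c -> (forall z, bd O z -> z.1 = c -> m2.2 <= z.2) ->
    perm_eq s [seq p : point <- P | (m2.2 <= p.2) && (p.2 <= m1.2)] ->
    sorted (fun a b : point => a.2 <= b.2) s ->
    Gprime O (leftof c P) VL EL ->
    Gprime O (rightof c P) VR ER ->
    Gprime O P
      (P ++ [:: m1; m2] ++ [seq (c, p.2) | p : point <- s] ++ VL ++ VR)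
      ([seq orient p (c, p.2) | p : point <- s]
       ++ consec (m2 :: rcons [seq (c, p.2) | p : point <- s] m1)
       ++ [seq (m1, p) | p : point <- P & m1.2 < p.2]
       ++ [seq (p, m2) | p : point <- P & p.2 < m2.2]
       ++ EL ++ ER).

(* a directed path from p along w (p :: w is the vertex sequence) in edge set E *)
Definition is_dpath (E : seq (point * point)) (p : point) (w : seq point) : bool :=
  path (fun u v => (u, v) \in E) p w.

Fixpoint pcost (p : point) (w : seq point) : R :=
  if w is v :: w' then d1 p v + pcost v w' else 0.

End Defs.

(* Main.v *)
Require Import Defs.
From HB Require Import structures.
From mathcomp Require Import all_boot all_order all_algebra.
From mathcomp Require Import all_classical all_reals all_analysis.
From mathcomp Require Import ring lra zify.
Import Order.TTheory GRing.Theory Num.Theory numFieldNormedType.Exports.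
Local Open Scope ring_scope.
Local Open Scope classical_set_scope.

Section S. Variable R : realType.
Lemma bnd (O : set (R*R)) : compact O -> exists M, forall p, O p -> `|p.2| <= M.
Proof.
move=> cO. case: (compact_bounded cO) => M [_ HM].
exists (M+1) => p Op. have := HM (M+1). rewrite ltrDl ltr01 => /(_ isT p Op) /=.
rewrite prod_normE; apply: le_trans; by rewrite le_max lexx orbT.
Qed.

Lemma vert_ext (O : set (R*R)) (d : R) : compact O -> `|d| = 1 -> d * d = 1 ->
  forall z, O z -> exists w, bd O w /\ w.1 = z.1 /\ d * z.2 <= d * w.2.
Proof.
move=> cO nd dd z Oz.
have [M HM] := bnd O cO.
pose K := [set t | O (z.1, d * t)].
have Kz : K (d * z.2) by rewrite /K /= mulrA dd mul1r -surjective_pairing.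
have hs : has_sup K.
  split; first by exists (d * z.2).
  exists M => t Kt. have := HM _ Kt => /=. rewrite normrM nd mul1r.
  apply: le_trans; exact: ler_norm.
pose s := sup K.
have ub := ub_le_sup hs.2.
have bl : forall t e, `|s - t| < e -> ball (z.1, d * s) e (z.1, d * t).
  move=> t e he; split => /=; first by apply: ballxx; apply: le_lt_trans he.
  by rewrite /ball /= -mulrBr normrM nd mul1r.
exists (z.1, d * s); split; last first.
  by split => //=; rewrite mulrA dd mul1r; exact: ub.
split.
  move=> B /nbhs_ballP [e e0 HB].
  have [t Kt lt] := sup_adherent e0 hs.
  exists (z.1, d * t); split => //; apply: HB; apply: bl.
  have := ub _ Kt; rewrite -/s => hts.
  rewrite ger0_norm ?subr_ge0 //. by rewrite ltrBlDr addrC -ltrBlDr.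
move=> /nbhs_ballP [e e0 HB].
have : K (s + e / 2).
  apply: HB; apply: bl. rewrite opprD addrA subrr sub0r normrN ger0_norm.
    by rewrite ltr_pdivrMr // ltr_pMr // ltr1n.
  by rewrite divr_ge0 // ltW.
move=> /ub. rewrite -/s => h. have : 0 < e / 2 by rewrite divr_gt0.
move: h. rewrite -lerBrDl subrr. move=> h1 h2. by have := le_lt_trans h1 h2; rewrite ltxx.
Qed.
Notation point := (R * R)%type.
Definition le2 (a b : point) := a.2 <= b.2.

Lemma le2_trans : transitive le2.
Proof. move=> y x z; exact: le_trans. Qed.

Lemma seg_cross (O : set point) pi pj c : convex_pl O -> O pi -> O pj ->
  pi.1 <= c -> c <= pj.1 -> pi.2 <= pj.2 ->
  exists z, [/\ O z, z.1 = c, pi.2 <= z.2 & z.2 <= pj.2].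
Proof.
move=> cv Oi Oj h1 h2 h3.
have [e|ne] := eqVneq pi.1 pj.1.
  exists pi; split => //. apply/eqP; rewrite eq_le h1 e h2 //.
have lt : pi.1 < pj.1 by rewrite lt_neqAle ne (le_trans h1 h2).
pose t := (pj.1 - c) / (pj.1 - pi.1).
have d0 : 0 < pj.1 - pi.1 by rewrite subr_gt0.
have t0 : 0 <= t by rewrite /t divr_ge0 // ?subr_ge0 // ltW.
have t1 : t <= 1 by rewrite /t ler_pdivrMr // mul1r lerB.
have tc : t * pi.1 + (1 - t) * pj.1 = c.
  rewrite /t; field. by rewrite subr_eq0 eq_sym.
exists (t * pi.1 + (1 - t) * pj.1, t * pi.2 + (1 - t) * pj.2); split => //=.
- by apply: cv => //; rewrite t0 t1.
- have : 0 <= (1 - t) * (pj.2 - pi.2) by rewrite mulr_ge0 // subr_ge0.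
  lra.
- have : 0 <= t * (pj.2 - pi.2) by rewrite mulr_ge0 // subr_ge0.
  lra.
Qed.

Lemma pcost_cat (p : point) (w1 w2 : seq point) : pcost p (w1 ++ w2) = pcost p w1 + pcost (last p w1) w2.
Proof. elim: w1 p => [|a w IH] p /=; first by rewrite add0r. by rewrite IH addrA. Qed.

Lemma consec_sub (p1 l : seq point) : {subset consec l <= consec (p1 ++ l)}.
Proof.
elim: p1 => [|a p1 IH] //= x hx.
case e: (p1 ++ l) => [|b r]; first by move: IH; rewrite e; move=> /(_ x hx).
rewrite /consec /= in_cons; apply/orP; right. by have := IH x hx; rewrite e.
Qed.

Lemma chain_path c (a : point) t v : (forall x, x \in a :: t -> x.1 = c) ->
  pairwise le2 (a :: t) -> v \in a :: t ->
  exists w, [/\ is_dpath (consec (a :: t)) a w, last a w = v & pcost a w = v.2 - a.2].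
Proof.
elim: t a => [|b t IH] a hc hp.
  rewrite inE => /eqP ->; exists [::]; split => //=; by rewrite subrr.
rewrite in_cons => /orP [/eqP ->|hv]; first by exists [::]; split => //=; rewrite subrr.
move: hp; rewrite pairwise_cons => /andP [/allP ha hp].
have [w [h1 h2 h3]] := IH b (fun x hx => hc x ltac:(by rewrite inE hx orbT)) hp hv.
exists (b :: w); split => //=.
- apply/andP; split; first by rewrite /consec /= inE eqxx.
  apply: sub_path h1 => x y hxy. by rewrite /consec /= inE hxy orbT.
- rewrite h3 /d1 (hc a) ?inE ?eqxx // (hc b) ?inE ?eqxx ?orbT // subrr normr0 add0r.
  rewrite ger0_norm ?subr_ge0; first by lra.
  by apply: (ha b); rewrite inE eqxx.
Qed.

Lemma chain_gen c (ch : seq point) u v : (forall x, x \in ch -> x.1 = c) ->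
  pairwise le2 ch -> u \in ch -> v \in ch -> u.2 <= v.2 ->
  exists w, [/\ is_dpath (consec ch) u w, last u w = v & pcost u w = v.2 - u.2].
Proof.
move=> hc hp hu hv huv.
case/splitPr: hu hc hp hv => p1 p2 hc hp hv.
have hv' : v \in u :: p2.
  move: hv; rewrite mem_cat => /orP [hv|//].
  move: hp; rewrite pairwise_cat => /and3P [hr _ _].
  have := allrelP hr v u hv (mem_head _ _). rewrite /le2 => h.
  have e2 : v.2 = u.2 by apply/eqP; rewrite eq_le h huv.
  have e1 : v.1 = u.1 by rewrite (hc v) ?(hc u) // mem_cat ?hv ?mem_head ?orbT.
  by rewrite [v]surjective_pairing e1 e2 -surjective_pairing mem_head.
have [w [h1 h2 h3]] := @chain_path c u p2 v (fun x hx => hc x ltac:(by rewrite mem_cat hx orbT))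
  ltac:(by move: hp; rewrite pairwise_cat => /and3P []) hv'.
exists w; split => //. apply: sub_path h1 => x y; exact: consec_sub.
Qed.
Lemma part1 (O : set point) PP VV EE : convex_region O -> Gprime O PP VV EE ->
  (forall p, p \in PP -> bd O p) ->
  forall pi pj, pi \in PP -> pj \in PP -> up pi pj ->
  exists w : seq point, [/\ is_dpath EE pi w, last pi w = pj & pcost pi w = d1 pi pj].
Proof.
move=> [cv cO _] G. elim: G => [P hP | P c m1 m2 s VL VR EL ER hsz hl hr
  bm1 m1c m1max bm2 m2c m2min ps ss GL IHL GR IHR] bdP pi pj hi hj hu.
  case: P hP bdP hi hj => [|a [|b l]] //= _ _; rewrite !inE => /eqP -> /eqP ->.
  by exists [::]; split => //=; rewrite /d1 !subrr normr0 addr0.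
case/andP: (hu) => hu1 hu2.
case: (ltP pj.1 c) => hjc.
  have hic : pi.1 < c by apply: le_lt_trans hjc.
  have bdL : forall p, p \in leftof c P -> bd O p.
    by move=> p; rewrite mem_filter => /andP [_ /bdP].
  have [w [h1 h2 h3]] := IHL bdL pi pj ltac:(by rewrite mem_filter hic hi)
    ltac:(by rewrite mem_filter hjc hj) hu.
  exists w; split => //; apply: sub_path h1 => x y h; by rewrite !mem_cat h !orbT.
case: (ltP c pi.1) => hci.
  have hcj : c < pj.1 by apply: lt_le_trans hu1.
  have bdR : forall p, p \in rightof c P -> bd O p.
    by move=> p; rewrite mem_filter => /andP [_ /bdP].
  have [w [h1 h2 h3]] := IHR bdR pi pj ltac:(by rewrite mem_filter hci hi)
    ltac:(by rewrite mem_filter hcj hj) hu.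
  exists w; split => //; apply: sub_path h1 => x y h; by rewrite !mem_cat h !orbT.
match goal with |- context [@is_dpath _ ?X] => set E := X end.
have clO : O = closure O by apply/closure_id; apply: compact_closed => //; exact: norm_hausdorff.
have inO : forall p, bd O p -> O p by move=> p [hp _]; rewrite clO.
have [z [Oz z1 zi zj]] := seg_cross O pi pj c cv (inO _ (bdP _ hi)) (inO _ (bdP _ hj)) hci hjc hu2.
have [w1 [bw1 [w11 w12]]] := vert_ext O 1 cO (normr1 _) (mulr1 1) z Oz.
have pim1 : pi.2 <= m1.2.
  have := m1max w1 bw1 (etrans w11 z1). rewrite !mul1r in w12. lra.
have [w2 [bw2 [w21 w22]]] := vert_ext O (-1) cO ltac:(by rewrite normrN normr1)
  ltac:(by rewrite mulrNN mulr1) z Oz.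
have m2pj : m2.2 <= pj.2.
  have := m2min w2 bw2 (etrans w21 z1). rewrite !mulN1r lerN2 in w22. lra.
have m21 : m2.2 <= m1.2 := m1max m2 bm2 m2c.
have hsP : forall p, p \in s -> m2.2 <= p.2 /\ p.2 <= m1.2.
  by move=> p; rewrite (perm_mem ps) mem_filter => /andP [/andP [a b] _].
pose ch := m2 :: rcons [seq (c, p.2) | p : point <- s] m1.
have chc : forall x, x \in ch -> x.1 = c.
  move=> x; rewrite /ch in_cons mem_rcons in_cons => /or3P [/eqP->|/eqP->|/mapP [p _ ->]] //.
have chp : pairwise le2 ch.
  rewrite /ch pairwise_cons -cats1 pairwise_cat; apply/andP; split.
    apply/allP => x; rewrite mem_cat inE => /orP [/mapP [p hp ->]| /eqP ->] //.
    exact: (hsP p hp).1.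
  apply/and3P; split => //.
    apply/allrelP => x y /mapP [p hp ->]; rewrite inE => /eqP ->; exact: (hsP p hp).2.
  rewrite pairwise_map.
  have hps : pairwise le2 s by rewrite -(sorted_pairwise le2_trans); exact: ss.
  move: hps; apply: sub_pairwise => x y; done.
have [u [eu uch du uu]] : exists u, [/\ (pi, u) \in E, u \in ch,
    d1 pi u = (c - pi.1) + (u.2 - pi.2) & (u.2 = pi.2 \/ u.2 = m2.2)].
  case: (ltP pi.2 m2.2) => hb.
    exists m2; split; last by right.
    - have hD : (pi, m2) \in [seq (p, m2) | p : point <- P & p.2 < m2.2].
        by apply/mapP; exists pi => //; rewrite mem_filter hb hi.
      by rewrite /E !mem_cat hD /= !orbT.
    - by rewrite /ch mem_head.
    - by rewrite /d1 m2c !ger0_norm // subr_ge0 // ltW.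
  have hs : pi \in s by rewrite (perm_mem ps) mem_filter hb pim1 hi.
  exists (c, pi.2); split; last by left.
  - have hA : (pi, (c, pi.2)) \in [seq orient p (c, p.2) | p : point <- s].
      have -> : (pi, (c, pi.2)) = orient pi (c, pi.2) by rewrite /orient /up /= hci lexx.
      exact: map_f.
    by rewrite /E !mem_cat hA.
  - by rewrite /ch in_cons mem_rcons in_cons map_f ?orbT.
  - by rewrite /d1 /= subrr normr0 ger0_norm ?subr_ge0 // addr0.
have [v [ev vch dv vv]] : exists v, [/\ (v, pj) \in E, v \in ch,
    d1 v pj = (pj.1 - c) + (pj.2 - v.2) & (v.2 = pj.2 \/ v.2 = m1.2)].
  case: (ltP m1.2 pj.2) => ha.
    exists m1; split; last by right.
    - have hC : (m1, pj) \in [seq (m1, p) | p : point <- P & m1.2 < p.2].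
        by apply/mapP; exists pj => //; rewrite mem_filter ha hj.
      by rewrite /E !mem_cat hC /= !orbT.
    - by rewrite /ch in_cons mem_rcons mem_head orbT.
    - by rewrite /d1 m1c !ger0_norm // subr_ge0 // ltW.
  have hs : pj \in s by rewrite (perm_mem ps) mem_filter m2pj ha hj.
  exists (c, pj.2); split; last by left.
  - have hA : ((c, pj.2), pj) \in [seq orient p (c, p.2) | p : point <- s].
      have -> : ((c, pj.2), pj) = orient pj (c, pj.2).
        rewrite /orient /up /=; case: ifP => // /andP [h _].
        have e : (c, pj.2) = pj.
          by move: h hjc; case: (pj) => a b /= h1 h3; congr pair; apply/eqP; rewrite eq_le h1 h3.
        by rewrite e.
      exact: map_f.
    by rewrite /E !mem_cat hA.
  - by rewrite /ch in_cons mem_rcons in_cons map_f ?orbT.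
  - by rewrite /d1 /= subrr normr0 ger0_norm ?subr_ge0 // addr0.
have huv : u.2 <= v.2.
  by case: uu => ->; case: vv => ->.
have [wc [c1 c2 c3]] := chain_gen c ch u v chc chp uch vch huv.
have c1' : path (fun a b => (a, b) \in E) u wc.
  apply: sub_path c1 => a b h. by rewrite /ch in h; rewrite /E !mem_cat h /= !orbT.
exists (u :: rcons wc pj); split.
- by rewrite /is_dpath /= eu rcons_path c1' c2 ev.
- by rewrite /= last_rcons.
- rewrite /= -cats1 pcost_cat c2 c3 /= du dv addr0.
  rewrite /d1 !ger0_norm ?subr_ge0 //. lra.
Qed.
Lemma size_consec (l : seq point) : (size (consec l) <= size l)%N.
Proof. by rewrite /consec size_zip geq_minl. Qed.

Lemma tlog_half a n : (a <= n./2)%N ->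
  (a * (trunc_log 2 a).+1 <= a * trunc_log 2 n)%N.
Proof.
move=> han. case: a han => [|a] han //. rewrite leq_mul2l /=.
apply: trunc_log_max => //. rewrite expnS.
have h1 := trunc_logP (isT : (1 < 2)%N) (isT : (0 < a.+1)%N).
have h2 := odd_double_half n. rewrite -addnn in h2.
have : (2 * 2 ^ trunc_log 2 a.+1 <= 2 * a.+1)%N by rewrite leq_mul2l.
lia.
Qed.

Lemma part2 (O : set point) PP VV EE : Gprime O PP VV EE ->
  (size VV <= 5 * size PP * (trunc_log 2 (size PP)).+1)%N /\
  (size EE <= 5 * size PP * (trunc_log 2 (size PP)).+1)%N.
Proof.
elim => [P hP | P c m1 m2 s VL VR EL ER hsz hl hr
  bm1 m1c m1max bm2 m2c m2min ps ss GL [IL1 IL2] GR [IR1 IR2]].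
  have h : forall k, (size P <= 5 * size P * k.+1)%N.
    move=> k; apply: (leq_trans (leq_pmull _ (isT : (0 < 5)%N))); exact: leq_pmulr.
  by split => //=.
set n := size P. set T := trunc_log 2 n.
set a := size (leftof c P). set b := size (rightof c P).
have hA := tlog_half _ _ hl. have hB := tlog_half _ _ hr.
have h2 := odd_double_half n. rewrite -addnn in h2.
have hab : (a * T + b * T <= n * T)%N by rewrite -mulnDl leq_mul2r; apply/orP; right; lia.
have hs : (size s <= n)%N by rewrite (perm_size ps) size_filter count_size.
have hf1 : (size [seq (m1, p) | p : point <- P & (m1.2 < p.2)%R] <= n)%N.
  by rewrite size_map size_filter count_size.
have hf2 : (size [seq (p, m2) | p : point <- P & (p.2 < m2.2)%R] <= n)%N.
  by rewrite size_map size_filter count_size.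
have hc := size_consec (m2 :: rcons [seq (c, p.2) | p : point <- s] m1).
rewrite /= size_rcons size_map in hc.
move: IL1 IL2 IR1 IR2 hA hB; rewrite -/a -/b -/n -/T -!mulnA => IL1 IL2 IR1 IR2 hA hB.
have hL1 : (size VL <= 5 * (a * T))%N by apply: (leq_trans IL1); rewrite leq_mul2l hA orbT.
have hL2 : (size EL <= 5 * (a * T))%N by apply: (leq_trans IL2); rewrite leq_mul2l hA orbT.
have hR1 : (size VR <= 5 * (b * T))%N by apply: (leq_trans IR1); rewrite leq_mul2l hB orbT.
have hR2 : (size ER <= 5 * (b * T))%N by apply: (leq_trans IR2); rewrite leq_mul2l hB orbT.
clear IL1 IL2 IR1 IR2 hA hB.

rewrite mulnS.
set x := (a * T)%N in hab hL1 hL2. set y := (b * T)%N in hab hR1 hR2. set z := (n * T)%N in hab *.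
clearbody x y z.
rewrite size_map in hf1. rewrite size_map in hf2.
split; rewrite !size_cat ?size_map /=; lia.
Qed.
End S.

Theorem lemma5 (R : realType) :
  (forall (O : set (R * R)) (P V : seq (R * R)) (E : seq ((R * R) * (R * R))),
     convex_region O -> uniq P -> (forall p, p \in P -> bd O p) ->
     Gprime O P V E ->
     forall pi pj, pi \in P -> pj \in P -> up pi pj ->
       exists w : seq (R * R),
         [/\ is_dpath E pi w, last pi w = pj & pcost pi w = d1 pi pj])
  /\
  (exists C : nat,
     forall (O : set (R * R)) (P V : seq (R * R)) (E : seq ((R * R) * (R * R))),
       convex_region O -> uniq P -> (forall p, p \in P -> bd O p) ->
       Gprime O P V E -> (2 <= size P)%N ->
       (size V <= C * (size P * trunc_log 2 (size P)))%N /\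
       (size E <= C * (size P * trunc_log 2 (size P)))%N).
Proof.
split.
  move=> O P V E cr _ bdP G pi pj hi hj hu.
  exact: (@part1 R O P V E cr G bdP pi pj hi hj hu).
exists 10%N => O P V E _ _ _ G h2.
have [h1 h3] := @part2 R O P V E G.
have hT : (1 <= trunc_log 2 (size P))%N by apply: trunc_log_max.
move: h1 h3 hT h2. set n := size P. set T := trunc_log 2 n. move=> h1 h3 hT h2.
have hnT : (n <= n * T)%N by rewrite leq_pmulr.
rewrite -mulnA mulnS in h1 h3.
set z := (n * T)%N in hnT h1 h3 *. clearbody z.
split; lia.
Qed.
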